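(* Let $\mathfrak{R}$ be a complete rewriting system on $\Sigma$ and let $(w,r_1,r_2)$ be a triple, where $\ell_1$ and $\ell_2$ denote the left-hand sides of the rules $r_1$ and $r_2$ respectively. Assume that $(w,r_1,r_2)$ is not $\tilde c$-defined. Then $\ell_1=xuy$ and $\ell_2=yvx$ for some words $u,v\in\Sigma^*$ and some non-empty words $x,y\in\Sigma^*$.
   Context: $\Sigma^*$ is the free monoid on $\Sigma$; a rewriting system is a set of rules $l\to r$ with $l,r\in\Sigma^*$, complete meaning terminating and confluent; a rule $l\to r$ can be applied to a word if $l$ is a subword (factor) of it. A triple $(w,r_1,r_2)$ consists of a word $w$ and rules $r_1,r_2\in\mathfrak{R}$ such that $r_1$ can be applied to some cyclic conjugate of $w$ and $r_2$ can be applied to some (possibly different) cyclic conjugate of $w$ (cyclic conjugates taken in $\Sigma^*$: $ab$ and $ba$). The triple is $\tilde c$-defined if some single cyclic conjugate of $w$ admits application of both $r_1$ and $r_2$. *)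

(* Defs.v *)
From mathcomp Require Import all_boot.
From Stdlib Require Import Relations.
Set Implicit Arguments. Unset Strict Implicit. Unset Printing Implicit Defensive.

Definition rule (Sigma : Type) := (seq Sigma * seq Sigma)%type.
Definition rewriting_system (Sigma : Type) := rule Sigma -> Prop.

Definition factor (Sigma : Type) (l t : seq Sigma) : Prop :=
  exists p s, t = p ++ l ++ s.

Definition step (Sigma : Type) (R : rewriting_system Sigma) (a b : seq Sigma) : Prop :=
  exists p s l r, R (l, r) /\ a = p ++ l ++ s /\ b = p ++ r ++ s.

Definition terminating (Sigma : Type) (R : rewriting_system Sigma) : Prop :=
  well_founded (fun b a => step R a b).

Definition confluent (Sigma : Type) (R : rewriting_system Sigma) : Prop :=
  forall a b c, clos_refl_trans _ (step R) a b -> clos_refl_trans _ (step R) a c ->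
    exists d, clos_refl_trans _ (step R) b d /\ clos_refl_trans _ (step R) c d.

Definition complete (Sigma : Type) (R : rewriting_system Sigma) : Prop :=
  terminating R /\ confluent R.

Definition cyclic_conjugate (Sigma : Type) (c w : seq Sigma) : Prop :=
  exists i, c = rot i w.

Definition applicable (Sigma : Type) (rl : rule Sigma) (t : seq Sigma) : Prop :=
  factor rl.1 t.

Definition is_triple (Sigma : Type) (R : rewriting_system Sigma)
    (w : seq Sigma) (r1 r2 : rule Sigma) : Prop :=
  R r1 /\ R r2 /\
  (exists c, cyclic_conjugate c w /\ applicable r1 c) /\
  (exists c, cyclic_conjugate c w /\ applicable r2 c).

Definition ctilde_defined (Sigma : Type) (w : seq Sigma) (r1 r2 : rule Sigma) : Prop :=
  exists c, cyclic_conjugate c w /\ applicable r1 c /\ applicable r2 c.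

(* Main.v *)
Require Import Defs.
From mathcomp Require Import all_boot.

Lemma cat_split (T : Type) (A B C D : seq T) :
  A ++ B = C ++ D ->
  (exists M, C = A ++ M /\ B = M ++ D) \/ (exists M, A = C ++ M /\ D = M ++ B).
Proof.
elim: A C => [|a A IH] [|c C] /=.
- move=> ->; left; by exists [::].
- move=> ->; left; by exists (c :: C).
- move=> <-; right; by exists (a :: A).
- case=> -> /IH [[M [-> ->]]|[M [-> ->]]].
  + left; by exists M.
  + right; by exists M.
Qed.

Lemma conj_split (T : Type) (c w : seq T) :
  cyclic_conjugate c w <-> exists A B, w = A ++ B /\ c = B ++ A.
Proof.
split.
- case=> i ->; exists (take i w), (drop i w); split; first by rewrite cat_take_drop.
  by [].
- case=> A [B [-> ->]]; exists (size A); by rewrite rot_size_cat.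
Qed.

Lemma conj_trans (T : Type) (c w C D : seq T) :
  cyclic_conjugate c w -> c = C ++ D -> cyclic_conjugate (D ++ C) w.
Proof.
move=> /conj_split [A [B [-> ->]]] /cat_split [[M [-> ->]]|[M [-> ->]]];
  apply/conj_split.
- exists M, (D ++ B); by rewrite !catA.
- exists (A ++ C), M; by rewrite !catA.
Qed.

Lemma conj_rel (T : Type) (c1 c2 w : seq T) :
  cyclic_conjugate c1 w -> cyclic_conjugate c2 w ->
  exists X Y, c1 = X ++ Y /\ c2 = Y ++ X.
Proof.
move=> /conj_split [A1 [B1 [-> ->]]] /conj_split [A2 [B2 [E ->]]].
case/cat_split: E => [[M [-> ->]]|[M [-> ->]]].
- exists M, (B2 ++ A1); by rewrite !catA.
- exists (B1 ++ A2), M; by rewrite !catA.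
Qed.

Theorem lemma5p4 (Sigma : Type) (R : rewriting_system Sigma)
  (w : seq Sigma) (r1 r2 : rule Sigma) :
  complete R ->
  is_triple R w r1 r2 ->
  ~ ctilde_defined w r1 r2 ->
  exists x y u v : seq Sigma,
    x <> [::] /\ y <> [::] /\ r1.1 = x ++ u ++ y /\ r2.1 = y ++ v ++ x.
Proof.
move=> _ [_ [_ [[c1 [H1 [P1 [S1 E1]]]] [c2 [H2 [P2 [S2 E2]]]]]]] ND.
have H1' := conj_trans _ _ _ _ _ H1 E1. have H2' := conj_trans _ _ _ _ _ H2 E2.
have [X [Y [F1 F2]]] := conj_rel _ _ _ _ H1' H2'.
move: F1 F2; rewrite -!catA => F1 F2; rewrite -!catA in H1' H2'.
case: (cat_split _ _ _ _ _ F1) => [[N [EX EY]]|[N [EL ES]]].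
- exfalso; apply: ND; exists (r2.1 ++ S2 ++ P2); split; first by [].
  split; last by exists [::], (S2 ++ P2).
  rewrite F2 EX; by exists Y, N; rewrite catA.
case: (cat_split _ _ _ _ _ F2) => [[N' [EY' EX']]|[N' [EL' ES']]].
- exfalso; apply: ND; exists (r1.1 ++ S1 ++ P1); split; first by [].
  split; first by exists [::], (S1 ++ P1).
  rewrite F1 EY'; by exists X, N'; rewrite catA.
have hN : N <> [::].
  move=> hN; apply: ND; exists (r2.1 ++ S2 ++ P2); split; first by [].
  split; last by exists [::], (S2 ++ P2).
  rewrite F2; exists Y, [::]; by rewrite EL hN !cats0.
have hN' : N' <> [::].
  move=> hN0; apply: ND; exists (r1.1 ++ S1 ++ P1); split; first by [].
  split; first by exists [::], (S1 ++ P1).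
  rewrite F1; exists X, [::]; by rewrite EL' hN0 !cats0.
exists N', N, (S2 ++ P2), (S1 ++ P1); do !split => //.
- by rewrite EL ES' -!catA.
- by rewrite EL' ES -!catA.
Qed.
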